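(* Let $\mathbb{F}$ be a field of characteristic zero, $d\ge 2$, $n\ge 0$, and let $a_{k,j}\in\mathbb{F}$ ($2\le k\le n$, $2\le j\le d$). Let $L_0,\dots,L_n$ be defined by $L_0=1$, $L_1=x_1$ and, for $2\le k\le n$, $$L_k=\Psi_1(M_1)+\sum_{j=2}^d\Psi_j\big((M_j)_{i_1=\dots=i_{j-1}=0}\big)+a_{k,2}x_2+\dots+a_{k,d}x_d,\quad M_1=L_{k-1},\ M_j=\sum_{t=2}^{k-1}a_{t,j}L_{k-t}.$$ Then for every $k=0,1,\dots,n$, $$L_k=\sum\frac{a_{2,2}^{\gamma_{2,2}}\cdots a_{n,2}^{\gamma_{2,n}}\cdots a_{2,d}^{\gamma_{d,2}}\cdots a_{n,d}^{\gamma_{d,n}}}{\gamma_{1,1}!\,\gamma_{2,2}!\cdots\gamma_{2,n}!\cdots\gamma_{d,2}!\cdots\gamma_{d,n}!}\,x_1^{\gamma_{1,1}}x_2^{\gamma_{2,2}+\dots+\gamma_{2,n}}\cdots x_d^{\gamma_{d,2}+\dots+\gamma_{d,n}},$$ where the sum runs over all nonnegative integers $\gamma_{1,1}$, $\gamma_{s,j}$ ($2\le s\le d$, $2\le j\le n$) with $\gamma_{1,1}+2(\gamma_{2,2}+\dots+\gamma_{d,2})+\dots+n(\gamma_{2,n}+\dots+\gamma_{d,n})=k$.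
   Context: $\Psi_j$ is the linear operator on $\mathbb{F}[x_1,\dots,x_d]$ with $\Psi_j(x_1^{\alpha_1}\cdots x_d^{\alpha_d})=\frac{1}{\alpha_j+1}x_1^{\alpha_1}\cdots x_j^{\alpha_j+1}\cdots x_d^{\alpha_d}$; $(M)_{i_1=\dots=i_{j-1}=0}$ is the sum of the terms of $M$ containing none of $x_1,\dots,x_{j-1}$. Convention: $0^0=1$. *)

(* Defs.v *)
From HB Require Import structures.
From mathcomp Require Import all_boot all_order all_algebra.
From mathcomp Require Import multinomials.mpoly.
Set Implicit Arguments. Unset Strict Implicit. Unset Printing Implicit Defensive.
Import Order.TTheory GRing.Theory.
Local Open Scope ring_scope.
Local Open Scope mpoly_scope.

(* Variables are indexed 0-based by 'I_d: the paper's x_j is 'X_(j-1). *)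

Definition Psi (F : fieldType) (d : nat) (i : 'I_d) (p : {mpoly F[d]})
  : {mpoly F[d]} :=
  \sum_(m <- msupp p) ((p@_m / ((m i).+1)%:R) *: 'X_[(m + U_(i))%MM]).

(* trunc j p : the sum of the terms of p containing none of the variables
   with 0-based index < j (paper: (M)_{i_1=...=i_j=0}, i.e. containing none
   of x_1,...,x_j). *)
Definition trunc (F : fieldType) (d : nat) (j : nat) (p : {mpoly F[d]})
  : {mpoly F[d]} :=
  \sum_(m <- msupp p | [forall i : 'I_d, (i < j)%N ==> (m i == 0%N)])
     (p@_m *: 'X_[m]).

(* Main.v *)
Require Import Defs.
From HB Require Import structures.
From mathcomp Require Import all_boot all_order all_algebra.
From mathcomp Require Import multinomials.mpoly.
From mathcomp Require Import multinomials.ssrcomplements.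
From mathcomp Require Import zify.
Import Order.TTheory GRing.Theory.
Local Open Scope ring_scope.

Definition Top (F : fieldType) (d : nat) (g : 'X_{1..d} -> {mpoly F[d]})
  (p : {mpoly F[d]}) : {mpoly F[d]} :=
  \sum_(m <- msupp p) (p@_m *: g m).
Arguments Top {F d}.

Lemma TopwE (F : fieldType) (d : nat) (g : 'X_{1..d} -> {mpoly F[d]}) (p : {mpoly F[d]}) k : (msize p <= k)%N ->
  @Top F d g p = \sum_(m : 'X_{1..d < k}) p@_m *: g m.
Proof.
pose I : subFinType _ := 'X_{1..d < k}.
move=> le_pk; rewrite /Top (big_mksub I) /=; first last.
  by move=> x /msize_mdeg_lt/leq_trans/(_ le_pk).
  by rewrite msupp_uniq.
rewrite big_rmcond //= => j /memN_msupp_eq0 ->.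
by rewrite scale0r.
Qed.

Lemma Top_is_linear (F : fieldType) (d : nat) (g : 'X_{1..d} -> {mpoly F[d]}) : linear (@Top F d g).
Proof.
move=> c p q; set j := maxn (msize p) (maxn (msize q) (msize (c *: p + q))).
rewrite !(@TopwE _ _ _ _ j) ?leq_maxl // ?(leq_trans (leq_maxl _ _) (leq_maxr _ _))
  ?(leq_trans (leq_maxr _ _) (leq_maxr _ _)) //.
rewrite scaler_sumr -big_split /=; apply/eq_bigr=> k _.
by rewrite !scalerA -scalerDl mcoeffD mcoeffZ.
Qed.

HB.instance Definition _ (F : fieldType) (d : nat) (g : 'X_{1..d} -> {mpoly F[d]}) :=
  GRing.isLinear.Build F {mpoly F[d]} {mpoly F[d]} _ (@Top F d g) (@Top_is_linear F d g).

Lemma TopX (F : fieldType) (d : nat) (g : 'X_{1..d} -> {mpoly F[d]}) m : @Top F d g 'X_[m] = g m.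
Proof. by rewrite /Top msuppX big_seq1 mcoeffX eqxx scale1r. Qed.

Lemma PsiE (F : fieldType) (d : nat) (i : 'I_d) p :
  Psi i p = Top (fun m => ((m i).+1%:R^-1 : F) *: 'X_[(m + U_(i))%MM]) p.
Proof. by apply: eq_bigr => m _; rewrite scalerA. Qed.

Lemma truncE (F : fieldType) (d : nat) j p :
  @trunc F d j p = Top (fun m => if [forall i : 'I_d, (i < j)%N ==> (m i == 0%N)]
                               then 'X_[m] else 0) p.
Proof. by rewrite /trunc big_mkcond; apply: eq_bigr => m _; case: ifP; rewrite ?scaler0. Qed.

Lemma nat_neq0 (F : fieldType) (hF : [pchar F] =i pred0) (k : nat) :
  (0 < k)%N -> (k%:R : F) != 0.
Proof. by move=> hk; rewrite (pcharf0P F).1 // -lt0n. Qed.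

Lemma decompX (F : fieldType) (hF : [pchar F] =i pred0) (d : nat) (m : 'X_{1..d}) :
  (('X_[m] : {mpoly F[d]})@_0)%:MP
    + \sum_(j : 'I_d) Psi j (trunc j (mderiv j 'X_[m])) = 'X_[m].
Proof.
under eq_bigr do rewrite mderivX truncE PsiE !linearZ /=.
have [->|m0] := eqVneq m 0%MM.
  rewrite mcoeffX eqxx big1 ?addr0 ?mpolyX0 // => j _.
  by rewrite mnm0E scale0r.
rewrite mcoeffX (negbTE m0) add0r.
have [i0 hi0] : exists i, (0 < m i)%N.
  case: (pickP (fun i => 0 < m i)%N) => [i hi|h]; first by exists i.
  by case/eqP: m0; apply/mnmP => i; rewrite mnm0E; move: (h i); case: (m i).
case: (@arg_minnP _ i0 (fun i => 0 < m i)%N (fun i : 'I_d => val i) hi0) => j0 hj0 hmin.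
rewrite (bigD1 j0) //= big1 ?addr0.
  rewrite TopX.
  have -> : [forall i : 'I_d, (i < j0)%N ==> ((m - U_(j0))%MM i == 0%N)].
    apply/forallP => i; apply/implyP => hi; rewrite mnmBE mnm1E.
    case: (posnP (m i)) => [->//|hmi]; have := hmin i hmi; by rewrite leqNgt hi.
  rewrite TopX scalerA mnmBE mnm1E eqxx subn1 prednK // mulfV ?nat_neq0 // scale1r.
  by rewrite submK //; apply/mnm_lepP => i; rewrite mnm1E; case: eqP => // <-.
move=> j hj; rewrite TopX; case: (posnP (m j)) => [->|hmj]; first by rewrite scale0r.
have hlt : (j0 < j)%N.
  by rewrite ltn_neqAle hmin // andbT; apply: contra hj => /eqP/val_inj ->.
have -> : [forall i : 'I_d, (i < j)%N ==> ((m - U_(j))%MM i == 0%N)] = false.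
  apply/negbTE/forallPn; exists j0; rewrite negb_imply hlt mnmBE mnm1E.
  by rewrite (_ : (j == j0) = false) ?subn0 -?lt0n // ; apply/negbTE.
by rewrite linear0 scaler0.
Qed.

Lemma decomp (F : fieldType) (hF : [pchar F] =i pred0) (d : nat) (f : {mpoly F[d]}) :
  f = (f@_0)%:MP + \sum_(j : 'I_d) Psi j (trunc j (mderiv j f)).
Proof.
elim/mpolyind: f => [|c m p _ _ ih].
  by rewrite mcoeff0 big1 ?addr0 // => j _; rewrite linear0 truncE PsiE !linear0.
transitivity (c *: ((('X_[m] : {mpoly F[d]})@_0)%:MP
     + \sum_(j : 'I_d) Psi j (trunc j (mderiv j 'X_[m])))
   + ((p@_0)%:MP + \sum_(j : 'I_d) Psi j (trunc j (mderiv j p)))).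
  by rewrite (@decompX F hF d m) -ih.
rewrite mcoeffD mcoeffZ rmorphD /= scalerDr addrACA; congr (_ + _).
  by rewrite mpolyCM -mul_mpolyC.
rewrite scaler_sumr -big_split /=; apply: eq_bigr => j _.
by rewrite !truncE !PsiE !linearD !linearZ.
Qed.

Lemma mderiv_prod_seq (F : fieldType) (d : nat) (I : eqType) (j : 'I_d)
  (f : I -> {mpoly F[d]}) (r : seq I) : uniq r ->
  mderiv j (\prod_(x <- r) f x)
  = \sum_(x <- r) mderiv j (f x) * \prod_(y <- r | y != x) f y.
Proof.
elim: r => [|a r ih] /=.
  by move=> _; rewrite !big_nil -mpolyX0 mderivX mnm0E scale0r.
case/andP => anr ur; rewrite !big_cons mderivM ih // eqxx /=.
congr (_ + _).
  congr (_ * _); rewrite big_seq_cond [RHS]big_seq_cond; apply: eq_bigl => y.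
  by case: (boolP (y \in r)) => // yr; rewrite andbT; apply/esym/eqP => ya;
    move: anr; rewrite -ya yr.
rewrite mulr_sumr !big_seq; apply: eq_bigr => x xr.
rewrite big_cons (_ : (a != x) = true); last by apply/eqP => ax; move: anr; rewrite ax xr.
by rewrite mulrCA.
Qed.

Lemma mderiv_prod (F : fieldType) (d : nat) (I : finType) (j : 'I_d)
  (f : I -> {mpoly F[d]}) :
  mderiv j (\prod_x f x) = \sum_x mderiv j (f x) * \prod_(y | y != x) f y.
Proof. by rewrite mderiv_prod_seq // index_enum_uniq. Qed.

Lemma mderiv_exp (F : fieldType) (d : nat) (j : 'I_d) (u : {mpoly F[d]}) (n : nat) :
  mderiv j (u ^+ n) = n%:R *: (u ^+ n.-1 * mderiv j u).
Proof.
elim: n => [|n ih]; first by rewrite scale0r expr0 -mpolyX0 mderivX mnm0E scale0r.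
rewrite exprS mderivM ih /=; case: n ih => [|n] ih.
  by rewrite expr0 !mulr1 scale0r mulr0 addr0 scale1r mul1r.
rewrite -scalerAr mulrA -exprS /= [u^`M(j) * _]mulrC.
by rewrite -{1}(scale1r (u ^+ n.+1 * mderiv j u)) -scalerDl -(add1n n.+1) natrD.
Qed.

Definition wt (I : finType) (B : nat) (w : I -> nat) (g : {ffun I -> 'I_B.+1}) : nat :=
  (\sum_i w i * g i)%N.
Arguments wt {I B}.

Definition Eg (F : fieldType) (d : nat) (I : finType) (B : nat) (w : I -> nat)
  (u : I -> {mpoly F[d]}) (k : nat) : {mpoly F[d]} :=
  \sum_(g : {ffun I -> 'I_B.+1} | wt w g == k)
     (((\prod_i (g i)`!)%N%:R)^-1 : F) *: \prod_i u i ^+ g i.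
Arguments Eg {F d I}.

Lemma Eg0 (F : fieldType) (d : nat) (I : finType) (B : nat) (w : I -> nat)
  (u : I -> {mpoly F[d]}) : (forall i, 0 < w i)%N -> Eg B w u 0 = 1.
Proof.
move=> hw; rewrite /Eg (big_pred1 [ffun=> ord0]).
  rewrite big1 ?invr1 ?scale1r; last by move=> i _; rewrite ffunE.
  by rewrite big1 // => i _; rewrite ffunE expr0.
move=> g /=; rewrite /wt sum_nat_eq0; apply/forallP/eqP => [h|->].
  apply/ffunP => x; rewrite ffunE; apply/val_inj => /=.
  by move: (h x); rewrite muln_eq0 /= => /orP[/eqP hx|/eqP //]; move: (hw x); rewrite hx.
by move=> x; rewrite ffunE muln0.
Qed.

Lemma Egc (F : fieldType) (d : nat) (I : finType) (B : nat) (w : I -> nat)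
  (u : I -> {mpoly F[d]}) (k : nat) : (forall i, (u i)@_0 = 0) -> (0 < k)%N ->
  (Eg B w u k)@_0 = 0.
Proof.
move=> hu hk; rewrite /Eg raddf_sum big1 // => g /eqP hg.
rewrite /= mcoeffZ.
case: (pickP (fun i => 0 < g i)%N) => [i hi|h].
  rewrite [\prod_i u i ^+ g i](bigD1 i) //= (@mcoeff0_is_multiplicative d F).1 -(prednK hi) exprS.
  by rewrite (@mcoeff0_is_multiplicative d F).1 hu !mul0r mulr0.
move: hk; rewrite -hg /wt big1 // => i _.
by move: (h i); case: (g i) => -[] //= _ _; rewrite muln0.
Qed.

Definition incf (I : finType) (B : nat) (i : I) (g : {ffun I -> 'I_B.+1})
  : {ffun I -> 'I_B.+1} := [ffun x => if x == i then inord (g i).+1 else g x].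
Definition decf (I : finType) (B : nat) (i : I) (g : {ffun I -> 'I_B.+1})
  : {ffun I -> 'I_B.+1} := [ffun x => if x == i then inord (g i).-1 else g x].
Arguments incf {I B}.
Arguments decf {I B}.

Lemma incf_val (I : finType) (B : nat) (i : I) (g : {ffun I -> 'I_B.+1}) x :
  val (incf i g x) = if x == i then (if (g i < B)%N then (g i).+1 else 0%N) else g x.
Proof. by rewrite ffunE; case: eqP => // _; rewrite /inord val_insubd. Qed.

Lemma wt_ge (I : finType) (B : nat) (w : I -> nat) (g : {ffun I -> 'I_B.+1}) i :
  (w i * g i <= wt w g)%N.
Proof. by rewrite /wt (bigD1 i) //= leq_addr. Qed.

Lemma wt_incf (I : finType) (B : nat) (w : I -> nat) (g : {ffun I -> 'I_B.+1}) i :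
  (g i < B)%N -> wt w (incf i g) = (wt w g + w i)%N.
Proof.
move=> hb; rewrite /wt (bigD1 i) //= [in RHS](bigD1 i) //= incf_val eqxx hb.
rewrite (eq_bigr (fun x => w x * g x)%N); first by rewrite mulnS; lia.
by move=> x /negbTE hx; rewrite incf_val hx.
Qed.

Lemma decf_incf (I : finType) (B : nat) (g : {ffun I -> 'I_B.+1}) i :
  (g i < B)%N -> decf i (incf i g) = g.
Proof.
move=> hb; apply/ffunP => x; rewrite ffunE; case: eqP => [->|hx]; last first.
  by apply/val_inj; rewrite incf_val; case: eqP hx.
by apply/val_inj; rewrite /= incf_val eqxx hb /= inordK.
Qed.

Lemma incf_decf (I : finType) (B : nat) (g : {ffun I -> 'I_B.+1}) i :
  (0 < g i)%N -> incf i (decf i g) = g.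
Proof.
move=> hg; apply/ffunP => x; rewrite ffunE; case: eqP => [->|hx]; last first.
  by rewrite ffunE; case: eqP => // h; case: hx.
apply/val_inj; rewrite ffunE eqxx /= (inordK (leq_ltn_trans (leq_pred _) (ltn_ord _))).
by rewrite prednK // inordK.
Qed.

Lemma Eg_deriv_i (F : fieldType) (hF : [pchar F] =i pred0) (d : nat) (I : finType)
  (B : nat) (w : I -> nat) (u : I -> {mpoly F[d]}) (k : nat) (i : I) (D : {mpoly F[d]}) :
  (forall x, 0 < w x)%N -> (k <= B)%N ->
  \sum_(g : {ffun I -> 'I_B.+1} | wt w g == k)
     (((\prod_x (g x)`!)%N%:R)^-1 : F) *:
       (((g i)%:R *: (u i ^+ (g i).-1 * D)) * \prod_(y | y != i) u y ^+ g y)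
  = if (w i <= k)%N then D * Eg B w u (k - w i) else 0.
Proof.
move=> hw hkB.
rewrite (bigID (fun g : {ffun I -> 'I_B.+1} => 0 < g i)%N) /= [X in _ + X]big1 ?addr0; last first.
  move=> g /andP[_]; rewrite -leqNgt leqn0 => /eqP->.
  by rewrite scale0r mul0r scaler0.
rewrite (reindex_onto (incf i) (decf i)) /=; last by move=> g /andP[_ hg]; apply: incf_decf.
case: (leqP (w i) k) => hwk; last first.
  rewrite big_pred0 // => g; apply/negbTE; apply/andP => -[/andP[/eqP hk hpos] _].
  have := @wt_ge _ _ w (incf i g) i; rewrite hk => h.
  have : (w i <= w i * incf i g i)%N by rewrite leq_pmulr.
  lia.
rewrite /Eg mulr_sumr; apply: eq_big => g.
  case: (ltnP (g i) B) => hb.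
    rewrite wt_incf // decf_incf // eqxx andbT incf_val eqxx hb /= andbT.
    by apply/eqP/eqP; lia.
  rewrite incf_val eqxx (ltnNge (g i)) hb /= andbF andFb; apply/esym/negbTE.
  have := @wt_ge _ _ w g i; have := hw i.
  have : (g i <= w i * g i)%N by rewrite leq_pmull.
  move=> h1 h2 h3; apply/eqP => h4; lia.
move=> /andP[/andP[_ hpos] _].
have hb : (g i < B)%N.
  by move: hpos; rewrite incf_val eqxx; case: (ltnP (g i) B).
have hx : forall x, x != i -> incf i g x = g x.
  by move=> x hx; apply/val_inj; rewrite incf_val (negbTE hx).
have hii : val (incf i g i) = (g i).+1 by rewrite incf_val eqxx hb.
rewrite hii /= (bigD1 i) //= [in RHS](bigD1 i) //= hii.
rewrite [\prod_(y | y != i) u y ^+ incf i g y](eq_bigr (fun y => u y ^+ g y)); last first.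
  by move=> y /hx ->.
rewrite [\prod_(y | y != i) (incf i g y)`!](eq_bigr (fun y => (g y)`!)); last first.
  by move=> y /hx ->.
rewrite [\prod_i0 u i0 ^+ g i0](bigD1 i) // factS -mulnA natrM invfM.
rewrite -scalerAl scalerA mulrAC mulVf ?nat_neq0 // mul1r.
rewrite -scalerAr; congr (_ *: _).
by rewrite mulrA [D * _]mulrC.
Qed.

Lemma Eg_deriv (F : fieldType) (hF : [pchar F] =i pred0) (d : nat) (I : finType)
  (B : nat) (w : I -> nat) (u : I -> {mpoly F[d]}) (k : nat) (j : 'I_d) :
  (forall x, 0 < w x)%N -> (k <= B)%N ->
  mderiv j (Eg B w u k)
  = \sum_i (if (w i <= k)%N then mderiv j (u i) * Eg B w u (k - w i) else 0).
Proof.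
move=> hw hkB; rewrite [Eg B w u k]/Eg linear_sum /=.
under eq_bigr do rewrite linearZ /= mderiv_prod scaler_sumr.
rewrite exchange_big /=; apply: eq_bigr => i _.
rewrite -(@Eg_deriv_i F hF d I B w u k i (mderiv j (u i)) hw hkB).
by apply: eq_bigr => g _; rewrite mderiv_exp.
Qed.

Lemma Eg_rec (F : fieldType) (hF : [pchar F] =i pred0) (d : nat) (I : finType)
  (B : nat) (w : I -> nat) (u : I -> {mpoly F[d]}) (k : nat) :
  (forall x, 0 < w x)%N -> (forall x, (u x)@_0 = 0) -> (0 < k)%N -> (k <= B)%N ->
  Eg B w u k = \sum_(t : 'I_d) Psi t (trunc t
      (\sum_i (if (w i <= k)%N then mderiv t (u i) * Eg B w u (k - w i) else 0))).
Proof.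
move=> hw hu hk hkB; rewrite {1}(@decomp F hF d (Eg B w u k)) Egc // add0r.
by apply: eq_bigr => t _; rewrite (@Eg_deriv F hF).
Qed.

Lemma big_opt (R : Type) (idx : R) (op : Monoid.com_law idx) (T : finType) (F : option T -> R) :
  \big[op/idx]_(o : option T) F o = op (F None) (\big[op/idx]_(x : T) F (Some x)).
Proof.
rewrite (bigD1 None) //=; congr (op _ _).
rewrite (reindex_omap Some id) //=; last by case.
by apply: eq_bigl => x; rewrite eqxx.
Qed.

Lemma sum_range (R : nmodType) n k (f : nat -> R) : (k <= n)%N ->
  \sum_(j < n.+1) (if (2 <= j <= k)%N then f j else 0) = \sum_(2 <= t < k.+1) f t.
Proof.
move=> hkn.
rewrite big_geq_mkord (big_ord_widen_cond n.+1) // [RHS]big_mkcond /=.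
by apply: eq_bigr => j _; rewrite ltnS.
Qed.


Definition wC (d n : nat) (o : option ('I_d * 'I_n.+1)) : nat :=
  if o is Some p then maxn p.2 1 else 1%N.

Definition uC (F : fieldType) (d : nat) (hd : (2 <= d)%N) (n : nat) (a : nat -> nat -> F)
  (o : option ('I_d * 'I_n.+1)) : {mpoly F[d]} :=
  match o with
  | None => 'X_(Ordinal (ltnW hd))
  | Some p => if (p.1 == 0%N :> nat) || (p.2 < 2)%N then 0 else a p.2 p.1.+1 *: 'X_(p.1)
  end.
Arguments uC {F d} hd n a o.

Lemma wC_pos d n o : (0 < wC d n o)%N.
Proof. by case: o => [[s j]|] //=; rewrite leq_max orbT. Qed.

Lemma uC_c0 (F : fieldType) (d : nat) (hd : (2 <= d)%N) (n : nat) (a : nat -> nat -> F) o :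
  (uC hd n a o)@_0 = 0.
Proof.
case: o => [[s j]|] /=; last by rewrite mcoeffX mnm1_eq0.
by case: ifP => _; rewrite ?mcoeff0 // mcoeffZ mcoeffX mnm1_eq0 mulr0.
Qed.

Lemma dX (F : fieldType) (d : nat) (t s : 'I_d) :
  mderiv t ('X_s : {mpoly F[d]}) = (s == t)%:R.
Proof.
rewrite mderivX mnm1E; case: eqP => [->|_]; last by rewrite scale0r.
have -> : (U_(t) - U_(t))%MM = 0%MM by apply/mnmP => i; rewrite mnmBE subnn mnm0E.
by rewrite mpolyX0 scale1r.
Qed.

Lemma trunc0 (F : fieldType) (d : nat) (p : {mpoly F[d]}) : trunc 0 p = p.
Proof.
rewrite truncE /Top [RHS]mpolyE; apply: eq_bigr => m _; case: ifP => // h.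
by exfalso; move/negbT: h => /forallPn [i]; rewrite ltn0.
Qed.

Lemma dsum0 (F : fieldType) (d : nat) (hd : (2 <= d)%N) (n : nat) (a : nat -> nat -> F)
  (k : nat) : (0 < k)%N ->
  \sum_o (if (wC d n o <= k)%N then
            mderiv (Ordinal (ltnW hd)) (uC hd n a o) * Eg n (wC d n) (uC hd n a) (k - wC d n o)
          else 0)
  = Eg n (wC d n) (uC hd n a) k.-1.
Proof.
move=> hk; rewrite big_opt /= big1 ?addr0.
  by rewrite hk dX eqxx mul1r subn1.
case=> s j _ /=; case: ifP => // _; case: ifP => h; first by rewrite linear0 mul0r.
rewrite linearZ /= dX (_ : (s == _) = false) ?scaler0 ?mul0r //.
by apply/negbTE/eqP => hs; move: h; rewrite hs.
Qed.

Lemma dsumt (F : fieldType) (d : nat) (hd : (2 <= d)%N) (n : nat) (a : nat -> nat -> F)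
  (k : nat) (t : 'I_d) : (1 <= t)%N -> (k <= n)%N ->
  \sum_o (if (wC d n o <= k)%N then
            mderiv t (uC hd n a o) * Eg n (wC d n) (uC hd n a) (k - wC d n o)
          else 0)
  = \sum_(2 <= t2 < k.+1) a t2 t.+1 *: Eg n (wC d n) (uC hd n a) (k - t2).
Proof.
move=> ht hkn; rewrite big_opt /= dX.
rewrite (_ : (Ordinal _ == t) = false); last by apply/negbTE/eqP => h; move: ht; rewrite -h.
rewrite mul0r if_same add0r.
rewrite -(pair_bigA _ (fun (s : 'I_d) (j : 'I_n.+1) =>
   (if (maxn j 1 <= k)%N then mderiv t (uC hd n a (Some (s, j))) *
         Eg n (wC d n) (uC hd n a) (k - maxn j 1) else 0))) /=.
rewrite (bigD1 t) //= [X in _ + X]big1 ?addr0; last first.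
  move=> s hs; apply: big1 => j _; case: ifP => // _.
  case: ifP => _; first by rewrite linear0 mul0r.
  by rewrite linearZ /= dX (negbTE hs) scaler0 mul0r.
rewrite -(@sum_range _ n) //.
apply: eq_bigr => j _.
case: (ltnP j 2) => hj /=; first by rewrite orbT linear0 mul0r if_same.
rewrite orbF (_ : (t == 0%N :> nat) = false); last by apply/negbTE; rewrite -lt0n.
rewrite (_ : maxn j 1 = j); last by apply/maxn_idPl; lia.
rewrite linearZ /= dX eqxx.
by case: ifP => // _; rewrite -scalerAl mul1r.
Qed.

Lemma Psitrunc1 (F : fieldType) (d : nat) (j : 'I_d) :
  Psi j (trunc j (1 : {mpoly F[d]})) = 'X_j.
Proof.
rewrite -mpolyX0 truncE TopX.
have -> : [forall i : 'I_d, (i < j)%N ==> (0%MM i == 0%N)].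
  by apply/forallP => i; rewrite mnm0E eqxx implybT.
by rewrite PsiE TopX mnm0E invr1 scale1r add0m.
Qed.

Lemma Erec (F : fieldType) (hF : [pchar F] =i pred0) (d : nat) (hd : (2 <= d)%N)
  (n : nat) (a : nat -> nat -> F) (k : nat) : (0 < k)%N -> (k <= n)%N ->
  Eg n (wC d n) (uC hd n a) k
  = Psi (Ordinal (ltnW hd)) (Eg n (wC d n) (uC hd n a) k.-1)
    + \sum_(j : 'I_d | (1 <= j)%N)
        Psi j (trunc j (\sum_(2 <= t < k) (a t j.+1 *: Eg n (wC d n) (uC hd n a) (k - t)%N)))
    + \sum_(j : 'I_d | (1 <= j)%N) (a k j.+1 *: 'X_j *+ (1 < k)%N).
Proof.
move=> hk hkn.
rewrite (@Eg_rec F hF) //; [|exact: wC_pos|exact: uC_c0].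
rewrite (bigD1 (Ordinal (ltnW hd))) //= dsum0 // trunc0 -addrA; congr (_ + _).
rewrite -big_split /=; apply: eq_big => j.
  by rewrite -(inj_eq val_inj) /= lt0n.
move=> hj; have hj' : (0 < j)%N.
  by rewrite lt0n; move: hj; apply: contra => /eqP h; apply/eqP/val_inj.
rewrite dsumt //.
case: (ltnP 1 k) => hk2.
  rewrite big_nat_recr //= subnn Eg0; last exact: wC_pos.
  rewrite !truncE PsiE !linearD !linearZ /= -truncE -PsiE.
  by have h := @Psitrunc1 F d j; rewrite truncE PsiE in h; rewrite h mulr1n.
have -> : k = 1%N by lia.
by rewrite !big_geq // mulr0n addr0.
Qed.

Lemma big_used (R : Type) (idx : R) (op : Monoid.com_law idx) (d n : nat)
  (Fn : 'I_d -> 'I_n.+1 -> R) :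
  (forall (s : 'I_d) (j : 'I_n.+1), (s == 0%N :> nat) || (j < 2)%N -> Fn s j = idx) ->
  \big[op/idx]_(s : 'I_d) \big[op/idx]_(j : 'I_n.+1) Fn s j
  = \big[op/idx]_(s : 'I_d | (1 <= s)%N) \big[op/idx]_(j : 'I_n.+1 | (2 <= j)%N) Fn s j.
Proof.
move=> h; rewrite [RHS]big_mkcond; apply: eq_bigr => s _.
case: (posnP s) => [s0|spos] /=.
  by apply: big1 => j _; apply: h; rewrite s0.
rewrite [RHS]big_mkcond; apply: eq_bigr => j _.
by case: (ltnP j 2) => hj //=; apply: h; rewrite hj orbT.
Qed.

Lemma big_pair_split (R : Type) (idx : R) (op : Monoid.com_law idx) (I J : finType)
  (G : I * J -> R) :
  \big[op/idx]_(x : I * J) G x = \big[op/idx]_(i : I) \big[op/idx]_(j : J) G (i, j).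
Proof. by rewrite pair_bigA; apply: eq_bigr => -[]. Qed.

Definition hmap (d n k : nat) (p : 'I_k.+1 * {ffun 'I_d -> {ffun 'I_n.+1 -> 'I_k.+1}})
  : {ffun option ('I_d * 'I_n.+1) -> 'I_n.+1} :=
  [ffun o => match o with None => inord p.1 | Some x => inord (p.2 x.1 x.2) end].

Definition hinv (d n k : nat) (g : {ffun option ('I_d * 'I_n.+1) -> 'I_n.+1})
  : 'I_k.+1 * {ffun 'I_d -> {ffun 'I_n.+1 -> 'I_k.+1}} :=
  (inord (g None), [ffun s => [ffun j => inord (g (Some (s, j)))]]).

Lemma hmap_none (d n k : nat) (hkn : (k <= n)%N) p :
  (@hmap d n k p None : nat) = p.1.
Proof. by rewrite ffunE; apply: inordK; rewrite (leq_trans (ltn_ord _)) // ltnS. Qed.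

Lemma hmap_some (d n k : nat) (hkn : (k <= n)%N) p s j :
  (@hmap d n k p (Some (s, j)) : nat) = p.2 s j.
Proof. by rewrite ffunE; apply: inordK; rewrite (leq_trans (ltn_ord _)) // ltnS. Qed.

Lemma hinv_hmap (d n k : nat) (hkn : (k <= n)%N) p : @hinv d n k (@hmap d n k p) = p.
Proof.
case: p => g0 G; rewrite /hinv; congr (_, _).
  by apply/val_inj; rewrite /= hmap_none // inordK.
apply/ffunP => s; apply/ffunP => j; rewrite !ffunE; apply/val_inj.
have hG : (G s j < n.+1)%N by rewrite (leq_trans (ltn_ord _)) // ltnS.
by rewrite /= (inordK hG) inordK.
Qed.

Lemma wt_le (I : finType) (B : nat) (w : I -> nat) (g : {ffun I -> 'I_B.+1}) i :
  (0 < w i)%N -> (g i <= wt w g)%N.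
Proof. by move=> hw; apply: leq_trans (@wt_ge _ _ w g i); rewrite leq_pmull. Qed.

Lemma conv (F : fieldType) (d : nat) (hd : (2 <= d)%N) (n : nat) (a : nat -> nat -> F)
  (k : nat) : (k <= n)%N ->
  Eg n (wC d n) (uC hd n a) k =
  \sum_(g0 : 'I_k.+1)
   \sum_(G : {ffun 'I_d -> {ffun 'I_n.+1 -> 'I_k.+1}}
          | [forall s : 'I_d, forall j : 'I_n.+1,
               ((s == 0%N :> nat) || (j < 2)%N) ==> (G s j == 0%N :> nat)]
            && (g0 + \sum_(s : 'I_d | (1 <= s)%N)
                       \sum_(j : 'I_n.+1 | (2 <= j)%N) j * G s j == k)%N)
     (((\prod_(s : 'I_d | (1 <= s)%N) \prod_(j : 'I_n.+1 | (2 <= j)%N)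
          a j s.+1 ^+ G s j)
       / ((g0`! * \prod_(s : 'I_d | (1 <= s)%N)
                    \prod_(j : 'I_n.+1 | (2 <= j)%N) (G s j)`!)%N)%:R)
      *: ('X_(Ordinal (ltnW hd)) ^+ g0
          * \prod_(s : 'I_d | (1 <= s)%N)
              'X_s ^+ (\sum_(j : 'I_n.+1 | (2 <= j)%N) G s j)%N)).
Proof.
move=> hkn; rewrite /Eg.
rewrite (bigID (fun g : {ffun option ('I_d * 'I_n.+1) -> 'I_n.+1} =>
  [forall s : 'I_d, forall j : 'I_n.+1,
     ((s == 0%N :> nat) || (j < 2)%N) ==> (g (Some (s, j)) == 0%N :> nat)])) /=.
rewrite [X in _ + X]big1 ?addr0; last first.
  move=> g /andP[_ /forallPn [s /forallPn [j]]]; rewrite negb_imply => /andP[hu hg].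
  rewrite [X in _ *: X](bigD1 (Some (s, j))) //= hu expr0n (negbTE hg).
  by rewrite mul0r scaler0.
rewrite pair_big_dep /=.
rewrite (reindex_onto (@hmap d n k) (@hinv d n k)) /=; last first.
  move=> g /andP[/eqP hw _]; apply/ffunP => o.
  have ho : (g o <= k)%N by rewrite -hw; apply: wt_le; apply: wC_pos.
  have ho' : (g o < k.+1)%N by [].
  rewrite ffunE; apply/val_inj; case: o ho ho' => [[s j]|] ho ho' /=.
    by rewrite ffunE ffunE inordK ?inordK.
  by rewrite inordK ?inordK.
have eZ : forall g0 G, [forall s : 'I_d, forall j : 'I_n.+1, ((s == 0%N :> nat) || (j < 2)%N) ==>
        (hmap d n k (g0, G) (Some (s, j)) == 0%N :> nat)]
    = [forall s : 'I_d, forall j : 'I_n.+1, ((s == 0%N :> nat) || (j < 2)%N) ==>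
        (G s j == 0%N :> nat)].
  by move=> g0 G; apply: eq_forallb => s; apply: eq_forallb => j; rewrite hmap_some.
have uZ : forall G : {ffun 'I_d -> {ffun 'I_n.+1 -> 'I_k.+1}}, [forall s : 'I_d, forall j : 'I_n.+1, ((s == 0%N :> nat) || (j < 2)%N) ==>
        (G s j == 0%N :> nat)] ->
   forall (s : 'I_d) (j : 'I_n.+1), (s == 0%N :> nat) || (j < 2)%N -> nat_of_ord (G s j) = 0%N.
  by move=> G /forallP hZ s j hu; move/forallP: (hZ s) => /(_ j) /implyP /(_ hu) /eqP.
apply: eq_big => -[g0 G] /=.
  rewrite hinv_hmap // eqxx andbT eZ andbC.
  case: (boolP [forall s : 'I_d, forall j : 'I_n.+1, _]) => // /uZ hZ /=.
  congr (_ == k); rewrite /wt big_opt /= hmap_none // mul1n big_pair_split.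
  rewrite (@big_used _ _ addn); last first.
    by move=> s j hu /=; rewrite hmap_some //= hZ // muln0.
  rewrite /=; congr addn; apply: eq_bigr => s _; apply: eq_bigr => j hj /=.
  rewrite hmap_some //=.
  by rewrite (_ : maxn j 1 = j) //; apply/maxn_idPl; lia.
move=> /andP[/andP[_]]; rewrite eZ => /uZ hZ _.
rewrite !big_opt /= hmap_none // !big_pair_split.
rewrite (@big_used _ _ muln); last by move=> s j hu; rewrite hmap_some //= hZ.
rewrite (@big_used _ _ *%R); last by move=> s j hu; rewrite hmap_some //= hZ.
rewrite /=.
rewrite [X in (_ * X)%N](eq_bigr (fun s : 'I_d => \prod_(j < n.+1 | 1 < j) (G s j)`!)%N);
  last by move=> s _; apply: eq_bigr => j _; rewrite hmap_some.
rewrite [X in _ * X](eq_bigr (fun s : 'I_d =>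
   (\prod_(j < n.+1 | (1 < j)%N) a j s.+1 ^+ G s j) *: 'X_s ^+ (\sum_(j < n.+1 | (1 < j)%N) G s j))); last first.
  move=> s hs; rewrite (big_morph _ (exprD _) (expr0 _)).
  rewrite [LHS](eq_bigr (fun j : 'I_n.+1 => a j s.+1 ^+ G s j *: 'X_s ^+ G s j)) ?scaler_prod //.
  move=> j hj; rewrite hmap_some //=.
  rewrite (_ : (s == 0%N :> nat) || (j < 2)%N = false) ?exprZn //.
  by apply/negbTE; rewrite negb_or -lt0n hs -leqNgt hj.
by rewrite scaler_prod -scalerAr scalerA mulrC.
Qed.

Lemma L_eq_E (F : fieldType) (hF : [pchar F] =i pred0)
  (d : nat) (hd : (2 <= d)%N) (n : nat) (a : nat -> nat -> F)
  (L : nat -> {mpoly F[d]}) :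
  L 0%N = 1 ->
  ((1 <= n)%N -> L 1%N = 'X_(Ordinal (ltnW hd))) ->
  (forall k : nat, (2 <= k <= n)%N ->
     L k = Psi (Ordinal (ltnW hd)) (L k.-1)
           + \sum_(j : 'I_d | (1 <= j)%N)
               Psi j (trunc j (\sum_(2 <= t < k) (a t j.+1 *: L (k - t)%N)))
           + \sum_(j : 'I_d | (1 <= j)%N) (a k j.+1 *: 'X_j)) ->
  forall k : nat, (k <= n)%N -> L k = Eg n (wC d n) (uC hd n a) k.
Proof.
move=> hL0 hL1 hLk k; elim/ltn_ind: k => k ih hkn.
case: k ih hkn => [|[|k]] ih hkn.
- by rewrite hL0 Eg0 //; exact: wC_pos.
- rewrite hL1 // (@Erec F hF) //=.
  rewrite [X in _ + X]big1 ?addr0; last by move=> j _; rewrite mulr0n.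
  rewrite [X in _ + X]big1 ?addr0; last by move=> j _; rewrite big_geq // truncE PsiE !linear0.
  rewrite Eg0; last exact: wC_pos.
  by have := @Psitrunc1 F d (Ordinal (ltnW hd)); rewrite /= trunc0 => ->.
rewrite hLk ?hkn // (@Erec F hF) //= ih //.
have e1 : \sum_(j < d | (0 < j)%N)
     Psi j (trunc j (\sum_(2 <= t < k.+2) a t j.+1 *: L (k.+2 - t)%N))
   = \sum_(j < d | (0 < j)%N)
     Psi j (trunc j (\sum_(2 <= t < k.+2) a t j.+1 *: Eg n (wC d n) (uC hd n a) (k.+2 - t))).
  apply: eq_bigr => j _; congr (Psi _ (trunc _ _)).
  rewrite !big_nat; apply: eq_bigr => t /andP[ht1 ht2]; rewrite ih //; lia.
rewrite e1; congr (_ + _).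
lia.
Qed.

Theorem corollary6 (F : fieldType) (hF : [pchar F] =i pred0)
  (d : nat) (hd : (2 <= d)%N) (n : nat) (a : nat -> nat -> F)
  (L : nat -> {mpoly F[d]}) :
  L 0%N = 1 ->
  ((1 <= n)%N -> L 1%N = 'X_(Ordinal (ltnW hd))) ->
  (forall k : nat, (2 <= k <= n)%N ->
     L k = Psi (Ordinal (ltnW hd)) (L k.-1)
           + \sum_(j : 'I_d | (1 <= j)%N)
               Psi j (trunc j (\sum_(2 <= t < k) (a t j.+1 *: L (k - t)%N)))
           + \sum_(j : 'I_d | (1 <= j)%N) (a k j.+1 *: 'X_j)) ->
  forall k : nat, (k <= n)%N ->
  L k =
  \sum_(g0 : 'I_k.+1)
   \sum_(G : {ffun 'I_d -> {ffun 'I_n.+1 -> 'I_k.+1}}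
          | [forall s : 'I_d, forall j : 'I_n.+1,
               ((s == 0%N :> nat) || (j < 2)%N) ==> (G s j == 0%N :> nat)]
            && (g0 + \sum_(s : 'I_d | (1 <= s)%N)
                       \sum_(j : 'I_n.+1 | (2 <= j)%N) j * G s j == k)%N)
     (((\prod_(s : 'I_d | (1 <= s)%N) \prod_(j : 'I_n.+1 | (2 <= j)%N)
          a j s.+1 ^+ G s j)
       / ((g0`! * \prod_(s : 'I_d | (1 <= s)%N)
                    \prod_(j : 'I_n.+1 | (2 <= j)%N) (G s j)`!)%N)%:R)
      *: ('X_(Ordinal (ltnW hd)) ^+ g0
          * \prod_(s : 'I_d | (1 <= s)%N)
              'X_s ^+ (\sum_(j : 'I_n.+1 | (2 <= j)%N) G s j)%N)).
Proof.
move=> hL0 hL1 hLk k hkn.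
rewrite (@L_eq_E F hF d hd n a L hL0 hL1 hLk k hkn).
exact: conv.
Qed.
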